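(* If there exists a $(g,4;1)$-difference matrix over $\mathbb Z_g$, then there exists a $[2,2]$-GDC$(6)$ of type $g^4$ with size $2g^2$.
   Context: A $(g,4;1)$-difference matrix over $\mathbb Z_g$ is a $4\times g$ matrix $M=[m_{i,j}]$ with entries in $\mathbb Z_g$ such that for each $1\le r<s\le 4$, the differences $m_{r,j}-m_{s,j}$, $1\le j\le g$, comprise all elements of $\mathbb Z_g$. Ternary codes: a ternary code on a finite set $X$ is a subset $\mathcal C\subseteq\mathbb Z_3^X$; Hamming distance between $u,v$ is $|\{x:u_x\neq v_x\}|$; $u$ has composition $[w_1,w_2]$ if exactly $w_1$ coordinates equal $1$ and exactly $w_2$ equal $2$. A $[w_1,w_2]$-GDC$(d)$ is a triple $(X,\mathcal G,\mathcal C)$ where $\mathcal G$ is a partition of $X$ into groups and $\mathcal C\subseteq\mathbb Z_3^X$ is such that every codeword has composition $[w_1,w_2]$, any two distinct codewords have Hamming distance at least $d$, and every codeword has at most one nonzero coordinate in each group. Its type is the multiset of group sizes, written in exponential notation ($g^u$ means $u$ groups of size $g$); its size is $|\mathcal C|$. *)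

(* Defs.v *)
From mathcomp Require Import all_boot all_order all_algebra.
Set Implicit Arguments. Unset Strict Implicit. Unset Printing Implicit Defensive.
Import GRing.Theory.
Local Open Scope ring_scope.

Definition difference_matrix (g : nat) (M : 'M['Z_g]_(4, g)) : Prop :=
  forall r s : 'I_4, (r < s)%N ->
    forall z : 'Z_g, exists j : 'I_g, M r j - M s j = z.

Definition hamming (X : finType) (u v : {ffun X -> 'Z_3}) : nat :=
  #|[set x | u x != v x]|.

Definition has_composition (X : finType) (u : {ffun X -> 'Z_3}) (w1 w2 : nat) : Prop :=
  #|[set x | u x == 1%R]| = w1 /\ #|[set x | u x == 2%:R%R]| = w2.

Definition is_GDC (X : finType) (G : {set {set X}}) (C : {set {ffun X -> 'Z_3}})
    (w1 w2 d : nat) : Prop :=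
  [/\ partition G [set: X],
      (forall u, u \in C -> has_composition u w1 w2),
      (forall u v, u \in C -> v \in C -> u != v -> (d <= hamming u v)%N)
    & (forall u B, u \in C -> B \in G -> (#|[set x in B | u x != 0%R]| <= 1)%N)].

Definition GDC_type_uniform (X : finType) (G : {set {set X}}) (g u : nat) : Prop :=
  #|G| = u /\ (forall B, B \in G -> #|B| = g).

(* Main.v *)
Require Import Defs.
From mathcomp Require Import all_boot all_order all_algebra.
Set Implicit Arguments. Unset Strict Implicit. Unset Printing Implicit Defensive.
Import GRing.Theory.

Definition wrd g (p : 'I_4 -> 'Z_g) (s : 'I_4 -> 'Z_3) : {ffun 'I_4 * 'Z_g -> 'Z_3} :=
  [ffun x => if x.2 == p x.1 then s x.1 else 0%R].

Lemma inner g (p q : 'Z_g) (s t : 'Z_3) : s != 0%R -> t != 0%R ->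
  \sum_(z : 'Z_g) ((if z == p then s else 0%R) != (if z == q then t else 0%R) : nat) =
   (if p == q then (s != t : nat) else 2).
Proof.
move=> s0 t0; case: eqP => [<-|npq].
  rewrite (bigD1 p) //= eqxx big1 ?addn0 // => z /negPf ->; by rewrite eqxx.
have nqp : (q == p) = false by apply/eqP => E; apply: npq.
have npq' : (p == q) = false by apply/eqP.
rewrite (bigD1 p) //= (bigD1 q) /=; last by rewrite nqp.
rewrite eqxx nqp npq' eqxx (negPf s0) eq_sym (negPf t0).
rewrite big1 ?addn0 //.
by move=> z /andP[/negPf -> /negPf ->]; rewrite eqxx.
Qed.

Lemma ham_wrd g p q s t : (forall i, s i != 0%R) -> (forall i, t i != 0%R) ->
  hamming (@wrd g p s) (wrd q t) =
  \sum_(i < 4) (if p i == q i then (s i != t i : nat) else 2).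
Proof.
move=> s0 t0; rewrite /hamming -sum1_card big_mkcond /=.
transitivity (\sum_(i < 4) \sum_(z : 'Z_g) (wrd p s (i, z) != wrd q t (i, z) : nat)).
  rewrite pair_big /=; apply: eq_bigr => -[i z] _; rewrite inE; by case: (_ != _).
apply: eq_bigr => i _; rewrite -inner //; apply: eq_bigr => z _.
by rewrite !ffunE.
Qed.

Lemma comp_wrd g p s (c : 'Z_3) : c != 0%R ->
  #|[set x | @wrd g p s x == c]| = #|[set i | s i == c]|.
Proof.
move=> c0; rewrite -(card_imset _ (f := fun i => (i, p i))); last by move=> i k [].
apply: eq_card => -[i z]; rewrite inE ffunE /=; apply/idP/imsetP.
  case: (z =P p i) => [-> H|_]; last by rewrite eq_sym (negPf c0).
  by exists i; rewrite ?inE.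
by case=> k; rewrite inE => /eqP sk [-> ->]; rewrite eqxx sk.
Qed.

Lemma grp_wrd g p s (i : 'I_4) :
  #|[set x in [set y : 'I_4 * 'Z_g | y.1 == i] | @wrd g p s x != 0%R]| <= 1.
Proof.
apply: (@leq_trans #|[set (i, p i)]|); last by rewrite cards1.
apply: subset_leq_card; apply/subsetP => -[k z].
rewrite !inE ffunE /= => /andP[/eqP -> ]; case: (z =P p i) => [-> //|_]; by rewrite eqxx.
Qed.

Lemma dm_inj g (M : 'M['Z_g]_(4,g)) : 1 < g -> difference_matrix M ->
  forall r s : 'I_4, r < s -> injective (fun j => (M r j - M s j)%R).
Proof.
move=> hg dm r s rs j k E.
have H : #|[seq (M r x - M s x)%R | x in 'I_g]| == #|'I_g|.
  rewrite eqn_leq; apply/andP; split.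
    by rewrite (leq_trans (card_size _)) // size_map -cardE.
  have -> : #|'I_g| = #|'Z_g| by rewrite card_ord card_ord Zp_cast.
  apply: subset_leq_card; apply/subsetP => z _.
  have [j' Hj] := dm r s rs z; apply/mapP; exists j' => //; by rewrite mem_enum.
exact: (image_injP H).
Qed.

From mathcomp Require Import ring.

Definition i0 : 'I_4 := Ordinal (isT : 0 < 4).
Definition i1 : 'I_4 := Ordinal (isT : 1 < 4).
Definition i2 : 'I_4 := Ordinal (isT : 2 < 4).
Definition i3 : 'I_4 := Ordinal (isT : 3 < 4).

Lemma sum4 (F : 'I_4 -> nat) : \sum_(i < 4) F i = F i0 + F i1 + F i2 + F i3.
Proof.
rewrite !big_ord_recr big_ord0 /= add0n.
by congr (F _ + F _ + F _ + F _); apply: val_inj.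
Qed.

Definition off g (e : bool) (i : 'I_4) : 'Z_g := if (2 <= i) && e then 1%R else 0%R.
Definition pos g (M : 'M['Z_g]_(4,g)) (j : 'I_g) (a : 'Z_g) e i := (M i j + a + off g e i)%R.
Definition sg (e : bool) (i : 'I_4) : 'Z_3 := if (i < 2) == e then 2%:R%R else 1%R.

Lemma sg_nz e i : sg e i != 0%R.
Proof. by rewrite /sg; case: ((i < 2) == e). Qed.

Lemma sg_diff e e' i : e != e' -> sg e i != sg e' i.
Proof. by rewrite /sg; case: e; case: e'; case: (i < 2). Qed.

Section Main.
Variables (g : nat) (hg : 1 < g) (M : 'M['Z_g]_(4,g)) (dm : difference_matrix M).

Lemma agree2 j a j' a' e e' (r s : 'I_4) : r < s ->
  (off g e r - off g e' r = off g e s - off g e' s)%R ->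
  pos M j a e r = pos M j' a' e' r -> pos M j a e s = pos M j' a' e' s ->
  j = j' /\ (a + off g e r = a' + off g e' r)%R.
Proof.
move=> rs ho H1 H2.
have Hj : j = j'.
  apply: (dm_inj hg dm rs); apply/eqP; rewrite -subr_eq0.
  have -> : ((M r j - M s j) - (M r j' - M s j') =
     (pos M j a e r - pos M j' a' e' r) - (pos M j a e s - pos M j' a' e' s)
     - ((off g e r - off g e' r) - (off g e s - off g e' s)))%R by rewrite /pos; ring.
  by rewrite H1 H2 ho !subrr.
split=> //; subst j'; move: H1; rewrite /pos -!addrA; exact: addrI.
Qed.

Lemma one_nz : (1 : 'Z_g)%R != 0%R.
Proof. exact: oner_neq0. Qed.

Lemma offE e (i : 'I_4) : off g e i = if (2 <= i) && e then 1%R else 0%R.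
Proof. by []. Qed.

Lemma cross01 j a j' a' e e' : e != e' ->
  pos M j a e i0 = pos M j' a' e' i0 -> pos M j a e i1 = pos M j' a' e' i1 ->
  (pos M j a e i2 = pos M j' a' e' i2) \/ (pos M j a e i3 = pos M j' a' e' i3) -> False.
Proof.
move=> ne H0 H1 H23.
have [Hj Ha] := agree2 (isT : i0 < i1) (erefl _) H0 H1.
move: Ha; rewrite !offE /= !addr0 => Ha; subst j' a'.
have key : forall i : 'I_4, 2 <= i -> pos M j a e i = pos M j a e' i -> False.
  move=> i hi; rewrite /pos !offE hi /= => /addrI.
  move=> E; move: ne E; clear; case: e; case: e' => //= _ /eqP; by rewrite ?(negPf one_nz) // eq_sym (negPf one_nz).
by case: H23; apply: key.
Qed.

Lemma cross23 j a j' a' e e' (k : 'I_4) : k < 2 -> e != e' ->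
  pos M j a e i2 = pos M j' a' e' i2 -> pos M j a e i3 = pos M j' a' e' i3 ->
  pos M j a e k = pos M j' a' e' k -> False.
Proof.
move=> hk ne H2 H3 H0.
have [Hj Ha] := agree2 (isT : i2 < i3) (erefl _) H2 H3.
have hk' : (2 <= k) = false by rewrite leqNgt hk.
subst j'; move: H0; rewrite /pos !offE hk' /= !addr0 => /addrI Ha'; subst a'.
move: Ha; rewrite !offE /= => /addrI.
move=> E; move: ne E; clear; case: e; case: e' => //= _ /eqP; by rewrite ?(negPf one_nz) // eq_sym (negPf one_nz).
Qed.

Definition W (t : 'I_g * 'Z_g * bool) := wrd (pos M t.1.1 t.1.2 t.2) (sg t.2).

Lemma dist t t' : t != t' -> 6 <= hamming (W t) (W t').
Proof.
move: t t' => [[j a] e] [[j' a'] e'] neq.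
rewrite /W /= ham_wrd; [|exact: sg_nz|exact: sg_nz]; rewrite sum4.
have [Ee|ne] := eqVneq e e'.
  subst e'; rewrite !eqxx /=.
  have P : forall r s : 'I_4, r < s -> pos M j a e r = pos M j' a' e r ->
      pos M j a e s = pos M j' a' e s -> False.
    move=> r s rs Hr Hs; have [Hj Ha] := agree2 rs (etrans (subrr _) (esym (subrr _))) Hr Hs.
    subst j'; move/addIr: Ha => Ha; subst a'; by rewrite eqxx in neq.
  case: eqP => H0; case: eqP => H1; case: eqP => H2; case: eqP => H3 => //;
  first [ case: (P i0 i1 isT H0 H1) | case: (P i0 i2 isT H0 H2) | case: (P i0 i3 isT H0 H3)
    | case: (P i1 i2 isT H1 H2) | case: (P i1 i3 isT H1 H3) | case: (P i2 i3 isT H2 H3)].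
rewrite !sg_diff //=.
case: eqP => H0; case: eqP => H1; case: eqP => H2; case: eqP => H3 => //.
- by case: (cross01 ne H0 H1 (or_introl H2)).
- by case: (cross01 ne H0 H1 (or_introl H2)).
- by case: (cross01 ne H0 H1 (or_intror H3)).
- by case: (cross23 (isT : i0 < 2) ne H2 H3 H0).
- by case: (cross23 (isT : i1 < 2) ne H2 H3 H1).
Qed.
End Main.

Lemma sg_count1 e : #|[set i | sg e i == 1%R]| = 2.
Proof.
case: e.
- rewrite (_ : [set _ | _] = [set i2; i3]) ?cards2 //.
  by apply/setP => -[[|[|[|[|k]]]] Hk]; rewrite !inE.
- rewrite (_ : [set _ | _] = [set i0; i1]) ?cards2 //.
  by apply/setP => -[[|[|[|[|k]]]] Hk]; rewrite !inE.
Qed.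

Lemma sg_count2 e : #|[set i | sg e i == 2%:R%R]| = 2.
Proof.
case: e.
- rewrite (_ : [set _ | _] = [set i0; i1]) ?cards2 //.
  by apply/setP => -[[|[|[|[|k]]]] Hk]; rewrite !inE.
- rewrite (_ : [set _ | _] = [set i2; i3]) ?cards2 //.
  by apply/setP => -[[|[|[|[|k]]]] Hk]; rewrite !inE.
Qed.

Theorem mainTheorem6 (g : nat) (hg : (1 < g)%N) :
  (exists M : 'M['Z_g]_(4, g), difference_matrix M) ->
  exists (X : finType) (G : {set {set X}}) (C : {set {ffun X -> 'Z_3}}),
    [/\ is_GDC G C 2 2 6, GDC_type_uniform G g 4 & #|C| = (2 * g ^ 2)%N].
Proof.
move=> [M dm].
pose blk (i : 'I_4) := [set y : 'I_4 * 'Z_g | y.1 == i].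
have Winj : injective (W M).
  move=> t t' E; apply/eqP; apply: contraT => ne; have := dist hg dm ne.
  rewrite E /hamming (_ : [set x | _] = set0) ?cards0 //.
  by apply/setP => x; rewrite !inE eqxx.
have blk0 : set0 \notin [set blk i | i : 'I_4].
  apply/imsetP => -[i _ E]; have : (i, 0%R) \in blk i by rewrite inE.
  by rewrite -E inE.
have blkinj : injective blk.
  move=> i k E; have : (i, 0%R) \in blk i by rewrite inE.
  by rewrite E inE => /eqP.
have Zc : #|{: 'Z_g}| = g by rewrite card_ord Zp_cast.
exists ('I_4 * 'Z_g)%type, [set blk i | i : 'I_4], [set W M t | t : 'I_g * 'Z_g * bool].
split.
- split.
  + apply/and3P; split.
    * rewrite cover_imset; apply/eqP/setP => x; rewrite inE; apply/bigcupP.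
      by exists x.1 => //; rewrite inE.
    * have [] := trivIimset _ blk0 => // i k _ _ nki.
      apply/pred0P => x /=; rewrite !inE; apply/negP => /andP[/eqP -> /eqP E].
      by rewrite E eqxx in nki.
    * exact: blk0.
  + move=> u /imsetP[t _ ->]; split; rewrite /W comp_wrd ?sg_count1 ?sg_count2 //.
  + move=> u v /imsetP[t _ ->] /imsetP[t' _ ->] ne; apply: (dist hg dm).
    by apply: contraNneq ne => ->.
  + move=> u B /imsetP[t _ ->] /imsetP[i _ ->]; exact: grp_wrd.
- split; first by rewrite (card_imset _ blkinj) card_ord.
  move=> B /imsetP[i _ ->].
  rewrite (_ : blk i = [set (i, z) | z : 'Z_g]); last first.
    apply/setP => -[k z]; rewrite inE /=; apply/eqP/imsetP => [->|[z' _ [-> _]]] //.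
    by exists z.
  by rewrite card_imset ?Zc // => z z' [].
- by rewrite card_imset // !card_prod card_bool card_ord Zc mulnn mulnC.
Qed.
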